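(* Let $(X,d)$ be a complete metric space, $N\in\mathbb{N}\setminus\{0\}$, $\alpha:(X\times X)\times(X\times X)\rightarrow[0,+\infty)$ an $N$--transitive mapping on $X\times X$, and $F:X\times X\rightarrow X$ such that for every $\varepsilon>0$ there exists $\delta(\varepsilon)>0$ for which, for all $(x,y),(u,v)\in X\times X$, \[ \varepsilon\leq\tfrac{d(x,u)+d(y,v)}{2}<\varepsilon+\delta(\varepsilon)\Rightarrow\alpha((x,y),(u,v))\,d(F(x,y),F(u,v))<\varepsilon. \] Suppose that: (B1) for all $(x,y),(u,v)\in X\times X$, $\alpha((x,y),(u,v))\geq1$ implies $\alpha((F(x,y),F(y,x)),(F(u,v),F(v,u)))\geq1$; (B2) there exists $(x_{0},y_{0})\in X\times X$ such that $\alpha((x_{0},y_{0}),(F(x_{0},y_{0}),F(y_{0},x_{0})))\geq1$ and $\alpha((F(y_{0},x_{0}),F(x_{0},y_{0})),(y_{0},x_{0}))\geq1$; and at least one of: (B3) $F$ is continuous; or (B4) for every sequence $\{(x_{n},y_{n})\}$ in $X\times X$ with $x_{n}\rightarrow x$, $y_{n}\rightarrow y$ and $\alpha((x_{n},y_{n}),(x_{n+1},y_{n+1}))\geq1$, $\alpha((y_{n+1},x_{n+1}),(y_{n},x_{n}))\geq1$ for all $n$, there is a subsequence with $\alpha((x_{n(k)},y_{n(k)}),(x,y))\geq1$ and $\alpha((y,x),(y_{n(k)},x_{n(k)}))\geq1$ for all $k$. Assume further (B5): $X\times X$ is $\beta$--connected, where $\beta((x,y),(u,v))=\min\{\alpha((x,y),(u,v)),\alpha((v,u),(y,x))\}$.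 Then $F$ has a unique coupled fixed point, this coupled fixed point is of the form $(x^{\ast},x^{\ast})$, $x^{\ast}$ is the unique fixed point of $F$ (i.e., the unique $x$ with $F(x,x)=x$), and $F^{n}(x,y)\rightarrow x^{\ast}$ as $n\rightarrow\infty$ for all $x,y\in X$.
   Context: $\mathbb{N}$ is the set of non-negative integers. For a set $Z$ and $\gamma:Z\times Z\rightarrow[0,+\infty)$, $\gamma$ is $N$--transitive if for all $z_0,\dots,z_{N+1}\in Z$ with $\gamma(z_i,z_{i+1})\geq1$ for all $i\in\{0,\dots,N\}$ one has $\gamma(z_0,z_{N+1})\geq1$. A $\gamma$--chain from $z$ to $w$ is a tuple $(z_0,\dots,z_n)$ with $z_0=z$, $z_n=w$ and, for each $i$, $\gamma(z_{i-1},z_i)\geq1$ or $\gamma(z_i,z_{i-1})\geq1$; $Z$ is $\gamma$--connected if for all $z\neq w$ in $Z$ there is a $\gamma$--chain from $z$ to $w$. A coupled fixed point of $F$ is $(x,y)$ with $F(x,y)=x$, $F(y,x)=y$. Iterates of $F$: for $G,H:X\times X\to X$ define the symmetric composition $(G\ast H)(x,y)=G(H(x,y),H(y,x))$; set $F^{0}(x,y)=x$ and $F^{n+1}=F\ast F^{n}$. *)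

(* Defs.v *)
From Stdlib Require Import Reals.
Open Scope R_scope.

Definition is_metric {X : Type} (d : X -> X -> R) : Prop :=
  (forall x y, 0 <= d x y) /\
  (forall x y, d x y = 0 <-> x = y) /\
  (forall x y, d x y = d y x) /\
  (forall x y z, d x z <= d x y + d y z).

Definition converges {X : Type} (d : X -> X -> R) (s : nat -> X) (l : X) : Prop :=
  forall eps, 0 < eps -> exists N, forall n, (N <= n)%nat -> d (s n) l < eps.

Definition cauchy {X : Type} (d : X -> X -> R) (s : nat -> X) : Prop :=
  forall eps, 0 < eps -> exists N, forall m n, (N <= m)%nat -> (N <= n)%nat ->
    d (s m) (s n) < eps.

Definition complete {X : Type} (d : X -> X -> R) : Prop :=
  forall s, cauchy d s -> exists l, converges d s l.

Definition N_transitive {Z : Type} (N : nat) (g : Z -> Z -> R) : Prop :=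
  forall z : nat -> Z,
    (forall i, (i <= N)%nat -> 1 <= g (z i) (z (S i))) ->
    1 <= g (z 0%nat) (z (S N)).

Definition gamma_chain {Z : Type} (g : Z -> Z -> R) (z w : Z) : Prop :=
  exists (n : nat) (c : nat -> Z),
    c 0%nat = z /\ c n = w /\
    forall i, (i < n)%nat -> 1 <= g (c i) (c (S i)) \/ 1 <= g (c (S i)) (c i).

Definition gamma_connected {Z : Type} (g : Z -> Z -> R) : Prop :=
  forall z w : Z, z <> w -> gamma_chain g z w.

(* iterates: F^0(x,y) = x, F^{n+1} = F * F^n, (G*H)(x,y) = G(H(x,y),H(y,x)) *)
Fixpoint Fiter {X : Type} (F : X -> X -> X) (n : nat) : X -> X -> X :=
  match n with
  | O => fun x _ => x
  | S m => fun x y => F (Fiter F m x y) (Fiter F m y x)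
  end.

Definition continuous2 {X : Type} (d : X -> X -> R) (F : X -> X -> X) : Prop :=
  forall x y eps, 0 < eps -> exists delta, 0 < delta /\
    forall u v, d x u + d y v < delta -> d (F x y) (F u v) < eps.

(* Main.v *)
Require Import Defs.
From Stdlib Require Import Reals Lra Lia Classical.
Open Scope R_scope.

Fixpoint itr {Z : Type} (T : Z -> Z) (n : nat) (z : Z) : Z :=
  match n with O => z | S m => T (itr T m z) end.

Lemma itr_S {Z : Type} (T : Z -> Z) n z : itr T n (T z) = itr T (S n) z.
Proof. induction n; simpl in *; congruence. Qed.

Lemma itr_add {Z : Type} (T : Z -> Z) m n z : itr T m (itr T n z) = itr T (m + n) z.
Proof. induction m; simpl; congruence. Qed.

Lemma itr_fix {Z : Type} (T : Z -> Z) n z : T z = z -> itr T n z = z.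
Proof. intros H; induction n; simpl; congruence. Qed.

Lemma itr_pres {Z : Type} (T : Z -> Z) (P : Z -> Z -> Prop)
  (Hpres : forall p q, P p q -> P (T p) (T q)) n p q :
  P p q -> P (itr T n p) (itr T n q).
Proof. intros H; induction n; simpl; auto. Qed.

Lemma lim_unique {Z : Type} (r : Z -> Z -> R) (Hr : is_metric r) s a b :
  converges r s a -> converges r s b -> a = b.
Proof.
  destruct Hr as [H0 [H1 [Hs Ht]]]. intros Ha Hb.
  apply H1. destruct (Rle_lt_dec (r a b) 0) as [Hle|Hlt].
  - specialize (H0 a b); lra.
  - exfalso. destruct (Ha (r a b / 2)) as [n1 Hn1]; [lra|].
    destruct (Hb (r a b / 2)) as [n2 Hn2]; [lra|].
    specialize (Hn1 (n1 + n2)%nat ltac:(lia)). specialize (Hn2 (n1+n2)%nat ltac:(lia)).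
    pose proof (Ht a (s (n1+n2)%nat) b). rewrite (Hs a (s (n1+n2)%nat)) in H. lra.
Qed.


Definition MK {Z : Type} (r : Z -> Z -> R) (T : Z -> Z) (P : Z -> Z -> Prop) :=
  forall eps, 0 < eps -> exists delta, 0 < delta /\
    forall p q, P p q -> eps <= r p q < eps + delta -> r (T p) (T q) < eps.

Lemma nonexp {Z : Type} (r : Z -> Z -> R) (Hr : is_metric r) T P
  (Hmk : MK r T P) p q : P p q -> r (T p) (T q) <= r p q.
Proof.
  destruct Hr as [H0 [H1 [Hs Ht]]]. intros HP.
  destruct (Rle_lt_dec (r p q) 0) as [Hle|Hlt].
  - assert (p = q) by (apply H1; specialize (H0 p q); lra). subst.
    assert (r (T q) (T q) = 0) by (apply H1; auto). specialize (H0 q q). lra.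
  - destruct (Hmk (r p q) Hlt) as [de [Hde Hd]].
    left. apply Hd; auto. lra.
Qed.

Lemma nonexp_itr {Z : Type} (r : Z -> Z -> R) (Hr : is_metric r) T P
  (Hpres : forall p q, P p q -> P (T p) (T q))
  (Hmk : MK r T P) n p q : P p q -> r (itr T n p) (itr T n q) <= r p q.
Proof.
  intros HP; induction n; simpl; [lra|].
  eapply Rle_trans; [|exact IHn]. eapply nonexp; eauto. apply itr_pres; auto.
Qed.

Lemma asym {Z : Type} (r : Z -> Z -> R) (Hr : is_metric r) T P
  (Hpres : forall p q, P p q -> P (T p) (T q))
  (Hmk : MK r T P) p q : P p q ->
  forall e, 0 < e -> exists n0, forall n, (n0 <= n)%nat -> r (itr T n p) (itr T n q) < e.
Proof.
  intros HP.
  set (a := fun n => r (itr T n p) (itr T n q)).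
  assert (Hdec : forall n, a (S n) <= a n).
  { intros n; unfold a; simpl. eapply nonexp; eauto. apply itr_pres; auto. }
  assert (Hdec2 : forall n m, (n <= m)%nat -> a m <= a n).
  { intros n m Hnm; induction Hnm; [lra|]. specialize (Hdec m); lra. }
  assert (Hpos : forall n, 0 <= a n) by (intros; unfold a; apply Hr).
  destruct (decreasing_cv a) as [l Hl].
  { intro n; apply Hdec. }
  { exists 0. intros x [i Hi]. unfold opp_seq in Hi. specialize (Hpos i). lra. }
  assert (Hge : forall n, l <= a n).
  { intros n. destruct (Rle_lt_dec l (a n)) as [?|Hlt]; auto. exfalso.
    destruct (Hl (l - a n)) as [n1 Hn1]; [lra|].
    specialize (Hn1 (n + n1)%nat ltac:(lia)). specialize (Hdec2 n (n+n1)%nat ltac:(lia)).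
    unfold R_dist in Hn1. apply Rabs_def2 in Hn1. lra. }
  assert (Hl0 : l <= 0).
  { destruct (Rle_lt_dec l 0) as [?|Hlt]; auto. exfalso.
    destruct (Hmk l Hlt) as [de [Hde Hd]].
    destruct (Hl de Hde) as [n1 Hn1]. specialize (Hn1 n1 ltac:(lia)).
    unfold R_dist in Hn1. apply Rabs_def2 in Hn1.
    assert (a (S n1) < l).
    { unfold a; simpl. apply Hd. apply itr_pres; auto. specialize (Hge n1). unfold a in *. lra. }
    specialize (Hge (S n1)). lra. }
  intros e He. destruct (Hl e He) as [n1 Hn1]. exists n1. intros n Hn.
  specialize (Hn1 n Hn). unfold R_dist in Hn1. apply Rabs_def2 in Hn1. unfold a in Hn1. lra.
Qed.

Lemma cauchy_orbit {Z : Type} (r : Z -> Z -> R) (Hr : is_metric r) T P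
  (Hpres : forall p q, P p q -> P (T p) (T q))
  (Hmk : MK r T P) (N : nat) (HN : (0 < N)%nat)
  (Htr : forall z : nat -> Z, (forall i, (i <= N)%nat -> P (z i) (z (S i))) -> P (z 0%nat) (z (S N)))
  z0 : P z0 (T z0) -> cauchy r (fun n => itr T n z0).
Proof.
  intros H0.
  set (z := fun n => itr T n z0).
  assert (Hcons : forall n, P (z n) (z (S n))).
  { intros n. unfold z. rewrite <- itr_S. apply itr_pres; auto. }
  assert (Hcls : forall n k, P (z n) (z (n + 1 + k * N)%nat)).
  { intros n k. induction k.
    - replace (n + 1 + 0 * N)%nat with (S n) by lia. apply Hcons.
    - pose (c := fun i => match i with O => z n | S j => z (n + 1 + k * N + j)%nat end).
      assert (Hc : P (c 0%nat) (c (S N))).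
      { apply Htr. intros i Hi. destruct i as [|j]; simpl.
        - replace (n + 1 + k * N + 0)%nat with (n + 1 + k * N)%nat by lia. exact IHk.
        - replace (n + 1 + k * N + S j)%nat with (S (n + 1 + k * N + j)) by lia. apply Hcons. }
      simpl in Hc. replace (n + 1 + S k * N)%nat with (n + 1 + k * N + N)%nat by lia. exact Hc. }
  assert (Hzadd : forall m n, itr T m (z n) = z (m + n)%nat).
  { intros; unfold z; apply itr_add. }
  destruct Hr as [Hr0 [Hr1 [Hrs Hrt]]].
  assert (Hrr : forall x, r x x = 0) by (intros; apply Hr1; auto).
  intros e He.
  set (eps := e / 4).
  assert (Heps : 0 < eps) by (unfold eps; lra).
  destruct (Hmk eps Heps) as [de [Hde Hd]].
  set (de' := Rmin de eps).
  assert (Hde'1 : de' <= de) by apply Rmin_l.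
  assert (Hde'2 : de' <= eps) by apply Rmin_r.
  assert (Hde'0 : 0 < de') by (apply Rmin_glb_lt; auto).
  assert (HNpos : 0 < INR N + 1) by (pose proof (pos_INR N); lra).
  set (eta := de' / (2 * (INR N + 1))).
  assert (Heta0 : 0 < eta) by (unfold eta; apply Rdiv_lt_0_compat; lra).
  assert (Heta1 : INR N * eta + eta = de' / 2) by (unfold eta; field; lra).
  assert (HNe : 0 <= INR N * eta) by (apply Rmult_le_pos; [apply pos_INR | lra]).
  destruct (asym r (conj Hr0 (conj Hr1 (conj Hrs Hrt))) T P Hpres Hmk z0 (T z0) H0 eta Heta0)
    as [n0 Hn0].
  assert (HD : forall n, (n0 <= n)%nat -> r (z n) (z (S n)) < eta).
  { intros n Hn. specialize (Hn0 n Hn). unfold z. rewrite <- itr_S. exact Hn0. }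
  assert (Hsum : forall a j, (n0 <= a)%nat -> r (z a) (z (a + j)%nat) <= INR j * eta).
  { intros a j Ha. induction j.
    - simpl. replace (a + 0)%nat with a by lia. rewrite Hrr. lra.
    - rewrite S_INR. replace (a + S j)%nat with (S (a + j)) by lia.
      pose proof (Hrt (z a) (z (a + j)%nat) (z (S (a + j)))).
      pose proof (HD (a + j)%nat ltac:(lia)). lra. }
  assert (Hcl : forall k, r (z n0) (z (n0 + 1 + k * N)%nat) < eps + de' / 2).
  { intros k. induction k.
    - replace (n0 + 1 + 0 * N)%nat with (S n0) by lia. pose proof (HD n0 (le_n _)). lra.
    - set (m := (n0 + 1 + k * N)%nat) in *.
      replace (n0 + 1 + S k * N)%nat with (N + m)%nat by (unfold m; lia).
      pose proof (Hrt (z n0) (z (N + n0)%nat) (z (N + m)%nat)).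
      pose proof (Hsum n0 N (le_n _)). replace (n0 + N)%nat with (N + n0)%nat in H1 by lia.
      assert (Hsec : r (z (N + n0)%nat) (z (N + m)%nat) < eps).
      { rewrite <- !Hzadd.
        assert (HP : P (z n0) (z m)) by (unfold m; apply Hcls).
        destruct (Rlt_le_dec (r (z n0) (z m)) eps) as [Hlt|Hge].
        - eapply Rle_lt_trans; [|exact Hlt].
          apply (nonexp_itr r (conj Hr0 (conj Hr1 (conj Hrs Hrt))) T P Hpres Hmk); auto.
        - destruct N as [|N']; [lia|].
          rewrite <- !itr_S. eapply Rle_lt_trans.
          + apply (nonexp_itr r (conj Hr0 (conj Hr1 (conj Hrs Hrt))) T P Hpres Hmk). auto.
          + apply Hd; auto. lra. }
      lra. }
  assert (Hall : forall p, (n0 <= p)%nat -> r (z n0) (z p) < eps + de').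
  { intros p Hp. destruct (Nat.eq_dec p n0) as [->|Hne].
    - rewrite Hrr. lra.
    - pose proof (Nat.div_mod (p - n0 - 1) N ltac:(lia)) as Hdm.
      pose proof (Nat.mod_upper_bound (p - n0 - 1) N ltac:(lia)) as Hmb.
      set (q := ((p - n0 - 1) / N)%nat) in *. set (j := ((p - n0 - 1) mod N)%nat) in *.
      replace p with ((n0 + 1 + q * N) + j)%nat by lia.
      pose proof (Hrt (z n0) (z (n0 + 1 + q * N)%nat) (z (n0 + 1 + q * N + j)%nat)).
      pose proof (Hcl q). pose proof (Hsum (n0 + 1 + q * N)%nat j ltac:(lia)).
      assert (INR j * eta <= INR N * eta).
      { apply Rmult_le_compat_r; [lra|]. apply le_INR; lia. }
      lra. }
  exists n0. intros m p Hm Hp.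
  pose proof (Hall m Hm). pose proof (Hall p Hp).
  pose proof (Hrt (z m) (z n0) (z p)) as Hq. rewrite (Hrs (z m) (z n0)) in Hq.
  fold z. unfold eps in *. lra.
Qed.

Lemma chain_conv {Z : Type} (r : Z -> Z -> R) (Hr : is_metric r) T P
  (Hpres : forall p q, P p q -> P (T p) (T q))
  (Hmk : MK r T P) (k : nat) : forall c : nat -> Z,
  (forall i, (i < k)%nat -> P (c i) (c (S i)) \/ P (c (S i)) (c i)) ->
  forall e, 0 < e -> exists n0, forall n, (n0 <= n)%nat ->
    r (itr T n (c 0%nat)) (itr T n (c k)) < e.
Proof.
  pose proof Hr as [Hr0 [Hr1 [Hrs Hrt]]].
  induction k; intros c Hc e He.
  - exists 0%nat. intros n _. assert (r (itr T n (c 0%nat)) (itr T n (c 0%nat)) = 0) by (apply Hr1; auto). lra.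
  - destruct (IHk c ltac:(intros i Hi; apply Hc; lia) (e/2) ltac:(lra)) as [n1 Hn1].
    assert (Hs : exists n2, forall n, (n2 <= n)%nat -> r (itr T n (c k)) (itr T n (c (S k))) < e/2).
    { destruct (Hc k ltac:(lia)) as [HP|HP].
      - apply (asym r Hr T P Hpres Hmk); auto; lra.
      - destruct (asym r Hr T P Hpres Hmk _ _ HP (e/2) ltac:(lra)) as [n2 Hn2].
        exists n2. intros n Hn. rewrite Hrs. auto. }
    destruct Hs as [n2 Hn2]. exists (n1 + n2)%nat. intros n Hn.
    specialize (Hn1 n ltac:(lia)). specialize (Hn2 n ltac:(lia)).
    pose proof (Hrt (itr T n (c 0%nat)) (itr T n (c k)) (itr T n (c (S k)))). lra.
Qed.

Lemma zero_small x : 0 <= x -> (forall e, 0 < e -> x < e) -> x = 0.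
Proof.
  intros H0 H. destruct (Rle_lt_dec x 0); [lra|]. specialize (H (x/2) ltac:(lra)). lra.
Qed.

Definition rho {X : Type} (d : X -> X -> R) (p q : X * X) : R :=
  (d (fst p) (fst q) + d (snd p) (snd q)) / 2.
Definition Tm {X : Type} (F : X -> X -> X) (p : X * X) : X * X :=
  (F (fst p) (snd p), F (snd p) (fst p)).

Lemma rho_metric {X : Type} (d : X -> X -> R) : is_metric d -> is_metric (rho d).
Proof.
  intros [H0 [H1 [Hs Ht]]]. unfold rho. repeat split.
  - intros; pose proof (H0 (fst x) (fst y)); pose proof (H0 (snd x) (snd y)); lra.
  - intros Hz. pose proof (H0 (fst x) (fst y)); pose proof (H0 (snd x) (snd y)).
    destruct x, y; simpl in *. f_equal; apply H1; lra.
  - intros ->. rewrite (proj2 (H1 _ _) eq_refl), (proj2 (H1 (snd y) _) eq_refl). lra.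
  - intros; rewrite (Hs (fst x)), (Hs (snd x)); auto.
  - intros. pose proof (Ht (fst x) (fst y) (fst z)); pose proof (Ht (snd x) (snd y) (snd z)); lra.
Qed.

Lemma itr_Fiter {X : Type} (F : X -> X -> X) n x y :
  itr (Tm F) n (x, y) = (Fiter F n x y, Fiter F n y x).
Proof. induction n; simpl; auto. rewrite IHn. reflexivity. Qed.

Lemma incr_ge (nk : nat -> nat) : (forall k, (nk k < nk (S k))%nat) -> forall k, (k <= nk k)%nat.
Proof. intros H k; induction k; [lia|]. specialize (H k); lia. Qed.

Theorem corollary3 (X : Type) (d : X -> X -> R) (N : nat)
  (alpha : X * X -> X * X -> R) (F : X -> X -> X)
  (Hd : is_metric d) (Hcomp : complete d)
  (HN : (0 < N)%nat)
  (Halpha_nonneg : forall p q, 0 <= alpha p q)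
  (Htrans : N_transitive N alpha)
  (Hcontr : forall eps, 0 < eps -> exists delta, 0 < delta /\
     forall x y u v,
       eps <= (d x u + d y v) / 2 < eps + delta ->
       alpha (x, y) (u, v) * d (F x y) (F u v) < eps)
  (HB1 : forall x y u v, 1 <= alpha (x, y) (u, v) ->
       1 <= alpha (F x y, F y x) (F u v, F v u))
  (HB2 : exists x0 y0, 1 <= alpha (x0, y0) (F x0 y0, F y0 x0) /\
       1 <= alpha (F y0 x0, F x0 y0) (y0, x0))
  (HB34 : continuous2 d F \/
     (forall (xs ys : nat -> X) (x y : X),
        converges d xs x -> converges d ys y ->
        (forall n, 1 <= alpha (xs n, ys n) (xs (S n), ys (S n)) /\
                   1 <= alpha (ys (S n), xs (S n)) (ys n, xs n)) ->
        exists nk : nat -> nat, (forall k, (nk k < nk (S k))%nat) /\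
          forall k, 1 <= alpha (xs (nk k), ys (nk k)) (x, y) /\
                    1 <= alpha (y, x) (ys (nk k), xs (nk k))))
  (HB5 : gamma_connected
     (fun p q : X * X => Rmin (alpha p q) (alpha (snd q, fst q) (snd p, fst p)))) :
  exists xstar : X,
    (forall x y, (F x y = x /\ F y x = y) <-> (x = xstar /\ y = xstar)) /\
    F xstar xstar = xstar /\
    (forall x, F x x = x -> x = xstar) /\
    (forall x y, converges d (fun n => Fiter F n x y) xstar).
Proof.
  pose proof Hd as [Hd0 [Hd1 [Hds Hdt]]].
  pose proof (rho_metric d Hd) as Hr.
  pose proof Hr as [Hr0 [Hr1 [Hrs Hrt]]].
  set (P := fun p q : X * X => 1 <= alpha p q /\ 1 <= alpha (snd q, fst q) (snd p, fst p)).
  assert (Hpres : forall p q, P p q -> P (Tm F p) (Tm F q)).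
  { intros [x y] [u v] [H1 H2]; unfold P, Tm in *; simpl in *. split; apply HB1; auto. }
  assert (Hmk : MK (rho d) (Tm F) P).
  { intros eps Heps. destruct (Hcontr eps Heps) as [de [Hde Hc]]. exists de; split; auto.
    intros [x y] [u v] [H1 H2] Hb. unfold rho, Tm, P in *; simpl in *.
    pose proof (Hc x y u v Hb) as Hc1.
    assert (Hb2 : eps <= (d v y + d u x) / 2 < eps + de) by (rewrite (Hds v), (Hds u); lra).
    pose proof (Hc v u y x Hb2) as Hc2.
    pose proof (Hd0 (F x y) (F u v)). pose proof (Hd0 (F v u) (F y x)).
    assert (d (F x y) (F u v) <= alpha (x, y) (u, v) * d (F x y) (F u v)).
    { rewrite <- (Rmult_1_l (d (F x y) (F u v))) at 1. apply Rmult_le_compat_r; lra. }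
    assert (d (F v u) (F y x) <= alpha (v, u) (y, x) * d (F v u) (F y x)).
    { rewrite <- (Rmult_1_l (d (F v u) (F y x))) at 1. apply Rmult_le_compat_r; lra. }
    rewrite (Hds (F y x)). lra. }
  assert (Htr : forall z : nat -> X * X, (forall i, (i <= N)%nat -> P (z i) (z (S i))) ->
                  P (z 0%nat) (z (S N))).
  { intros z Hz. split.
    - apply Htrans. intros i Hi; apply Hz; auto.
    - pose (w := fun j => (snd (z (S N - j)%nat), fst (z (S N - j)%nat))).
      assert (Hw : 1 <= alpha (w 0%nat) (w (S N))).
      { apply Htrans. intros i Hi. unfold w.
        replace (S N - i)%nat with (S (N - i)) by lia.
        replace (S N - S i)%nat with (N - i)%nat by lia.
        apply (Hz (N - i)%nat ltac:(lia)). }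
      unfold w in Hw. replace (S N - 0)%nat with (S N) in Hw by lia.
      replace (S N - S N)%nat with 0%nat in Hw by lia. exact Hw. }
  assert (Hcompr : complete (rho d)).
  { intros s Hs.
    assert (Hc1 : cauchy d (fun n => fst (s n))).
    { intros e He. destruct (Hs (e/2) ltac:(lra)) as [n0 Hn0]. exists n0. intros m n Hm Hn.
      specialize (Hn0 m n Hm Hn). unfold rho in Hn0. pose proof (Hd0 (snd (s m)) (snd (s n))). lra. }
    assert (Hc2 : cauchy d (fun n => snd (s n))).
    { intros e He. destruct (Hs (e/2) ltac:(lra)) as [n0 Hn0]. exists n0. intros m n Hm Hn.
      specialize (Hn0 m n Hm Hn). unfold rho in Hn0. pose proof (Hd0 (fst (s m)) (fst (s n))). lra. }
    destruct (Hcomp _ Hc1) as [x Hx]. destruct (Hcomp _ Hc2) as [y Hy].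
    exists (x, y). intros e He. destruct (Hx e He) as [n1 Hn1]. destruct (Hy e He) as [n2 Hn2].
    exists (n1 + n2)%nat. intros n Hn. specialize (Hn1 n ltac:(lia)). specialize (Hn2 n ltac:(lia)).
    unfold rho; simpl. lra. }
  destruct HB2 as [x0 [y0 [Hx0 Hy0]]].
  set (z0 := (x0, y0)).
  assert (HP0 : P z0 (Tm F z0)) by (unfold P, Tm, z0; simpl; auto).
  pose proof (cauchy_orbit (rho d) Hr (Tm F) P Hpres Hmk N HN Htr z0 HP0) as Hcau.
  destruct (Hcompr _ Hcau) as [l Hl].
  assert (Hcons : forall n, P (itr (Tm F) n z0) (itr (Tm F) (S n) z0)).
  { intros n. rewrite <- itr_S. apply itr_pres; auto. }
  assert (Hshift : converges (rho d) (fun n => itr (Tm F) (S n) z0) l).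
  { intros e He. destruct (Hl e He) as [n1 Hn1]. exists n1. intros n Hn. apply Hn1. lia. }
  assert (Hfix : Tm F l = l).
  { destruct HB34 as [Hcont | Hseq].
    - symmetry. apply (lim_unique (rho d) Hr (fun n => itr (Tm F) (S n) z0)); auto.
      intros e He.
      destruct (Hcont (fst l) (snd l) e He) as [d1 [Hd1p Hd1']].
      destruct (Hcont (snd l) (fst l) e He) as [d2 [Hd2p Hd2']].
      destruct (Hl (Rmin d1 d2 / 2)) as [n1 Hn1].
      { apply Rdiv_lt_0_compat; [apply Rmin_glb_lt|]; lra. }
      exists n1. intros n Hn. specialize (Hn1 n Hn). simpl.
      set (s := itr (Tm F) n z0) in *.
      pose proof (Rmin_l d1 d2). pose proof (Rmin_r d1 d2).
      unfold rho, Tm in *; simpl in *.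
      assert (A1 : d (F (fst l) (snd l)) (F (fst s) (snd s)) < e).
      { apply Hd1'. rewrite (Hds (fst l)), (Hds (snd l)). lra. }
      assert (A2 : d (F (snd l) (fst l)) (F (snd s) (fst s)) < e).
      { apply Hd2'. rewrite (Hds (fst l)), (Hds (snd l)). lra. }
      rewrite (Hds (F (fst s) _)), (Hds (F (snd s) _)). lra.
    - set (xs := fun n => fst (itr (Tm F) n z0)). set (ys := fun n => snd (itr (Tm F) n z0)).
      assert (Hxs : converges d xs (fst l)).
      { intros e He. destruct (Hl (e/2) ltac:(lra)) as [n1 Hn1]. exists n1. intros n Hn.
        specialize (Hn1 n Hn). unfold rho, xs in *. pose proof (Hd0 (snd (itr (Tm F) n z0)) (snd l)). lra. }
      assert (Hys : converges d ys (snd l)).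
      { intros e He. destruct (Hl (e/2) ltac:(lra)) as [n1 Hn1]. exists n1. intros n Hn.
        specialize (Hn1 n Hn). unfold rho, ys in *. pose proof (Hd0 (fst (itr (Tm F) n z0)) (fst l)). lra. }
      destruct (Hseq xs ys (fst l) (snd l) Hxs Hys) as [nk [Hnk Hnk2]].
      { intros n. unfold xs, ys. rewrite <- !surjective_pairing. apply Hcons. }
      assert (HPk : forall k, P (itr (Tm F) (nk k) z0) l).
      { intros k. destruct (Hnk2 k) as [A B]. unfold xs, ys in *.
        rewrite <- !surjective_pairing in A. split; auto. }
      pose proof (incr_ge nk Hnk) as Hge.
      symmetry. apply (lim_unique (rho d) Hr (fun k => itr (Tm F) (S (nk k)) z0)).
      + intros e He. destruct (Hl e He) as [n1 Hn1]. exists n1. intros n Hn. apply Hn1.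
        specialize (Hge n). lia.
      + intros e He. destruct (Hl e He) as [n1 Hn1]. exists n1. intros n Hn.
        simpl. eapply Rle_lt_trans.
        * apply (nonexp (rho d) Hr (Tm F) P Hmk). apply HPk.
        * apply Hn1. specialize (Hge n). lia. }
  assert (Hgen : forall p e, 0 < e -> exists n0, forall n, (n0 <= n)%nat ->
            rho d l (itr (Tm F) n p) < e).
  { intros p e He. destruct (classic (l = p)) as [<-|Hne].
    - exists 0%nat. intros n _. rewrite (itr_fix _ _ _ Hfix).
      rewrite (proj2 (Hr1 l l) eq_refl). lra.
    - destruct (HB5 l p Hne) as [k [c [Hc0 [Hck Hc]]]].
      assert (Hc' : forall i, (i < k)%nat -> P (c i) (c (S i)) \/ P (c (S i)) (c i)).
      { intros i Hi. unfold P.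
        destruct (Hc i Hi) as [H|H]; [left|right];
          (split; eapply Rle_trans; [exact H| apply Rmin_l | exact H | apply Rmin_r]). }
      destruct (chain_conv (rho d) Hr (Tm F) P Hpres Hmk k c Hc' e He) as [n0 Hn0].
      exists n0. intros n Hn. specialize (Hn0 n Hn). rewrite Hc0, Hck in Hn0.
      rewrite (itr_fix _ _ _ Hfix) in Hn0. exact Hn0. }
  assert (Huniq : forall w, Tm F w = w -> w = l).
  { intros w Hw. symmetry. apply Hr1. apply zero_small; [apply Hr0|].
    intros e He. destruct (Hgen w e He) as [n0 Hn0]. specialize (Hn0 n0 (le_n _)).
    rewrite (itr_fix _ _ _ Hw) in Hn0. exact Hn0. }
  destruct l as [a b].
  assert (Hab : F a b = a /\ F b a = b).
  { unfold Tm in Hfix; simpl in Hfix. injection Hfix; auto. }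
  assert (Hba : (b, a) = (a, b)).
  { apply Huniq. unfold Tm; simpl. destruct Hab as [-> ->]. reflexivity. }
  injection Hba as Heq. subst b.
  exists a. split; [|split; [|split]].
  - intros x y. split.
    + intros [H1 H2]. assert (Hxy : (x, y) = (a, a)).
      { apply Huniq. unfold Tm; simpl. rewrite H1, H2. reflexivity. }
      injection Hxy; auto.
    + intros [-> ->]. tauto.
  - tauto.
  - intros x Hx. assert (Hxy : (x, x) = (a, a)).
    { apply Huniq. unfold Tm; simpl. rewrite Hx. reflexivity. }
    injection Hxy; auto.
  - intros x y e He. destruct (Hgen (x, y) (e/2) ltac:(lra)) as [n0 Hn0].
    exists n0. intros n Hn. specialize (Hn0 n Hn). rewrite itr_Fiter in Hn0.
    unfold rho in Hn0; simpl in Hn0. pose proof (Hd0 a (Fiter F n y x)).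
    rewrite Hds. lra.
Qed.
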